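(* Let $f,g:[a,b]\to[0,\infty)$, $0\le a<b$, be convex functions with $f,g\in L^1[a,b]$. Then \[ \frac{1}{b-a}\int_a^b f(x)^{\frac{x-a}{b-a}}\, g(x)^{\frac{b-x}{b-a}}\,dx \le \frac13\left[f(b)+g(a)\right]+\frac16\left[g(b)+f(a)\right]. \]
   Context: The convention $0^0=1$ is used in the integrand. *)

(* Defs.v *)
From Stdlib Require Export Reals.
Open Scope R_scope.

(* Real power x^y for x >= 0 with the convention 0^0 = 1 (and 0^y = 0 for y <> 0).
   For x > 0 this is Rpower x y = exp (y * ln x). *)
Definition rpow0 (x y : R) : R :=
  if Req_EM_T x 0 then (if Req_EM_T y 0 then 1 else 0) else Rpower x y.

Definition convex_on (a b : R) (f : R -> R) : Prop :=
  forall x y t, a <= x <= b -> a <= y <= b -> 0 <= t <= 1 ->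
    f (t * x + (1 - t) * y) <= t * f x + (1 - t) * f y.

Definition integrand (a b : R) (f g : R -> R) (x : R) : R :=
  rpow0 (f x) ((x - a) / (b - a)) * rpow0 (g x) ((b - x) / (b - a)).

(* Main.v *)
Require Import Defs.
From Stdlib Require Import Reals Lra Lia RList RiemannInt_SF.
From Coquelicot Require Import Coquelicot.
Open Scope R_scope.


Lemma rpow0_ge0 x y : 0 <= rpow0 x y.
Proof.
  unfold rpow0; destruct (Req_EM_T x 0); [destruct (Req_EM_T y 0); lra|].
  unfold Rpower; left; apply exp_pos.
Qed.

Lemma rpow0_pos x y : 0 < x -> rpow0 x y = Rpower x y.
Proof. intros; unfold rpow0; destruct (Req_EM_T x 0); [lra|auto]. Qed.

Lemma rpow0_zero y : y <> 0 -> rpow0 0 y = 0.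
Proof. intros; unfold rpow0; destruct (Req_EM_T 0 0); [|lra]; destruct (Req_EM_T y 0); lra. Qed.

Lemma rpow0_0 x : 0 <= x -> rpow0 x 0 = 1.
Proof. intros; unfold rpow0; destruct (Req_EM_T x 0); [destruct (Req_EM_T 0 0); lra|].
  apply Rpower_O; lra. Qed.

Lemma rpow0_1 x : 0 <= x -> rpow0 x 1 = x.
Proof. intros; unfold rpow0; destruct (Req_EM_T x 0); [destruct (Req_EM_T 1 0); lra|].
  apply Rpower_1; lra. Qed.

Lemma ln_le_sub1 y : 0 < y -> ln y <= y - 1.
Proof. intros; pose proof (exp_ineq1_le (ln y)); rewrite exp_ln in H0; lra. Qed.

Lemma amgm_pos u v t : 0 < u -> 0 < v -> 0 <= t <= 1 ->
  Rpower u t * Rpower v (1 - t) <= t * u + (1 - t) * v.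
Proof.
  intros hu hv ht. set (m := t*u + (1-t)*v).
  assert (hm : 0 < m) by (unfold m; nra).
  unfold Rpower; rewrite <- exp_plus.
  rewrite <- (exp_ln m) by lra.
  assert (h1 : ln (u * / m) <= u * / m - 1) by (apply ln_le_sub1; apply Rmult_lt_0_compat; [lra| apply Rinv_0_lt_compat; lra]).
  assert (h2 : ln (v * / m) <= v * / m - 1) by (apply ln_le_sub1; apply Rmult_lt_0_compat; [lra| apply Rinv_0_lt_compat; lra]).
  rewrite ln_mult, ln_Rinv in h1, h2 by (try apply Rinv_0_lt_compat; lra).
  assert (t * (u * / m - 1) + (1 - t) * (v * / m - 1) = 0).
  { unfold m in *. field. lra. }
  destruct (Req_dec (t * ln u + (1 - t) * ln v) (ln m)) as [e|ne]; [rewrite e; lra|].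
  left; apply exp_increasing. nra.
Qed.

Lemma amgm u v t : 0 <= u -> 0 <= v -> 0 <= t <= 1 ->
  rpow0 u t * rpow0 v (1 - t) <= t * u + (1 - t) * v.
Proof.
  intros hu hv ht.
  destruct (Req_dec t 0) as [->|t0].
  { rewrite rpow0_0, Rminus_0_r, rpow0_1; lra. }
  destruct (Req_dec t 1) as [->|t1].
  { replace (1-1) with 0 by ring. rewrite rpow0_0, rpow0_1; lra. }
  destruct (Req_dec u 0) as [->|u0].
  { rewrite rpow0_zero by auto. pose proof (rpow0_ge0 v (1-t)). nra. }
  destruct (Req_dec v 0) as [->|v0].
  { rewrite (rpow0_zero (1-t)) by lra. pose proof (rpow0_ge0 u t). nra. }
  rewrite !rpow0_pos by lra. apply amgm_pos; lra.
Qed.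


Lemma div_ge0 x y : 0 <= x -> 0 < y -> 0 <= x / y.
Proof. intros; unfold Rdiv; apply Rmult_le_pos; [lra| left; apply Rinv_0_lt_compat; lra]. Qed.
Lemma div_gt0 x y : 0 < x -> 0 < y -> 0 < x / y.
Proof. intros; unfold Rdiv; apply Rmult_lt_0_compat; [lra| apply Rinv_0_lt_compat; lra]. Qed.
Lemma div_le1 x y : x <= y -> 0 < y -> x / y <= 1.
Proof. intros; unfold Rdiv; replace 1 with (y * / y) by (field; lra);
  apply Rmult_le_compat_r; [left; apply Rinv_0_lt_compat|]; lra. Qed.
Lemma div_lt1 x y : x < y -> 0 < y -> x / y < 1.
Proof. intros; unfold Rdiv; replace 1 with (y * / y) by (field; lra);
  apply Rmult_lt_compat_r; [apply Rinv_0_lt_compat|]; lra. Qed.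

Lemma cont_eps f x :
  (forall eps, 0 < eps -> exists alp, 0 < alp /\ forall y, Rabs (y - x) < alp -> Rabs (f y - f x) < eps) ->
  continuity_pt f x.
Proof.
  intros H eps heps. destruct (H eps heps) as [alp [ha hy]].
  exists alp; split; [lra|]. intros y [_ hd]. simpl in *. unfold Rdist in *. apply hy; auto.
Qed.

Lemma conv_at a b f X Y t z : convex_on a b f -> a <= X <= b -> a <= Y <= b -> 0 <= t <= 1 ->
  z = t * X + (1 - t) * Y -> f z <= t * f X + (1 - t) * f Y.
Proof. intros hc hX hY ht ->; apply hc; auto. Qed.

Lemma convex_lip a b f M x y : convex_on a b f -> (forall z, a <= z <= b -> 0 <= f z <= M) ->
  forall d, 0 < d -> a <= x - d -> x + d <= b -> Rabs (y - x) <= d ->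
  Rabs (f y - f x) <= M / d * Rabs (y - x).
Proof.
  intros hc hb d hd h1 h2 hyx.
  assert (hxd := hb (x+d) ltac:(lra)). assert (hxm := hb (x-d) ltac:(lra)).
  assert (hx := hb x ltac:(lra)).
  destruct (Rle_dec x y) as [le|lt].
  - rewrite (Rabs_right (y - x)) in hyx |- * by lra. assert (0 <= y - x) by lra. set (s := y - x) in *.
    assert (hy := hb y ltac:(unfold s in *; lra)).
    assert (u := conv_at a b f (x+d) x (s/d) y hc ltac:(lra) ltac:(lra)
       ltac:(split; [apply div_ge0; lra| apply div_le1; lra]) ltac:(unfold s; field; lra)).
    assert (w := conv_at a b f y (x-d) (d/(d+s)) x hc ltac:(unfold s in *; lra) ltac:(lra)
       ltac:(split; [apply div_ge0; lra| apply div_le1; lra]) ltac:(unfold s; field; lra)).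
    assert (e1 : 1 - s/d = (d - s)/d) by (field; lra).
    assert (e2 : 1 - d/(d+s) = s/(d+s)) by (field; lra).
    rewrite e1 in u; rewrite e2 in w.
    assert (0 <= s/(d+s) <= s/d).
    { split. apply div_ge0; lra. unfold Rdiv. apply Rmult_le_compat_l; [lra|].
      apply Rinv_le_contravar; lra. }
    assert (M / d * s = s/d * M) by (field; lra).
    apply Rabs_le; split.
    + assert (f x - f y <= s/(d+s) * (f (x-d) - f y)).
      { assert (f x <= d/(d+s) * f y + s/(d+s) * f (x-d)) by lra.
        assert (d/(d+s) = 1 - s/(d+s)) by (field; lra). nra. }
      nra.
    + assert (f y - f x <= s/d * (f (x+d) - f x)).
      { assert ((d-s)/d = 1 - s/d) by (field; lra). nra. }
      assert (0 <= s/d) by (apply div_ge0; lra). nra.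
  - rewrite (Rabs_left (y - x)) in hyx |- * by lra. assert (0 <= x - y) by lra. assert (x - y <= d) by lra. set (s := x - y) in *.
    assert (hy := hb y ltac:(unfold s in *; lra)).
    assert (u := conv_at a b f (x-d) x (s/d) y hc ltac:(lra) ltac:(lra)
       ltac:(split; [apply div_ge0; lra| apply div_le1; lra]) ltac:(unfold s; field; lra)).
    assert (w := conv_at a b f y (x+d) (d/(d+s)) x hc ltac:(unfold s in *; lra) ltac:(lra)
       ltac:(split; [apply div_ge0; lra| apply div_le1; lra]) ltac:(unfold s; field; lra)).
    assert (e1 : 1 - s/d = (d - s)/d) by (field; lra).
    assert (e2 : 1 - d/(d+s) = s/(d+s)) by (field; lra).
    rewrite e1 in u; rewrite e2 in w.
    assert (0 <= s/(d+s) <= s/d).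
    { split. apply div_ge0; lra. unfold Rdiv. apply Rmult_le_compat_l; [lra|].
      apply Rinv_le_contravar; lra. }
    assert (M / d * - (y - x) = s/d * M) by (unfold s; field; lra).
    apply Rabs_le; split.
    + assert (f x - f y <= s/(d+s) * (f (x+d) - f y)).
      { assert (f x <= d/(d+s) * f y + s/(d+s) * f (x+d)) by lra.
        assert (d/(d+s) = 1 - s/(d+s)) by (field; lra). nra. }
      nra.
    + assert (f y - f x <= s/d * (f (x-d) - f x)).
      { assert ((d-s)/d = 1 - s/d) by (field; lra). nra. }
      assert (0 <= s/d) by (apply div_ge0; lra). nra.
Qed.

Lemma convex_cont a b f M x : convex_on a b f -> (forall z, a <= z <= b -> 0 <= f z <= M) ->
  a < x < b -> continuity_pt f x.
Proof.
  intros hc hb hx. set (d := Rmin (x - a) (b - x)).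
  assert (hd : 0 < d) by (unfold d; apply Rmin_glb_lt; lra).
  assert (d <= x - a /\ d <= b - x) by (unfold d; split; [apply Rmin_l|apply Rmin_r]).
  assert (hM : 0 <= M) by (destruct (hb x); lra).
  apply cont_eps; intros eps he.
  exists (Rmin d (eps * d / (M + 1))). split.
  { apply Rmin_glb_lt; auto. apply div_gt0; nra. }
  intros y hy.
  assert (h1 : Rabs (y - x) < d) by (eapply Rlt_le_trans; [apply hy| apply Rmin_l]).
  assert (h2 : Rabs (y - x) < eps * d / (M+1)) by (eapply Rlt_le_trans; [apply hy| apply Rmin_r]).
  eapply Rle_lt_trans; [apply (convex_lip a b f M x y hc hb d); lra|].
  assert (M / d * Rabs (y - x) <= M/d * (eps * d / (M+1))).
  { apply Rmult_le_compat_l; [apply div_ge0; lra|lra]. }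
  assert (M / d * (eps * d / (M+1)) = eps * (M / (M+1))) by (field; lra).
  assert (M / (M+1) < 1) by (apply div_lt1; lra).
  nra.
Qed.


Lemma cont_eps_inv f x : continuity_pt f x -> forall eps, 0 < eps ->
  exists alp, 0 < alp /\ forall y, Rabs (y - x) < alp -> Rabs (f y - f x) < eps.
Proof.
  intros H eps he. destruct (H eps he) as [alp [ha hy]].
  exists alp; split; [lra|]. intros y hd.
  destruct (Req_dec y x) as [->|ne].
  - rewrite Rminus_diag, Rabs_R0; auto.
  - apply (hy y). split; [split; [exact I| auto]|]. simpl; unfold Rdist; auto.
Qed.

Lemma cont_exp_form (h s : R -> R) x : 0 < h x -> continuity_pt h x -> continuity_pt s x ->
  continuity_pt (fun y => exp (s y * ln (h y))) x.
Proof.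
  intros hp ch cs.
  apply (continuity_pt_comp (fun y => s y * ln (h y)) exp).
  - apply (continuity_pt_mult s (fun y => ln (h y))); auto.
    apply (continuity_pt_comp h ln); auto.
    apply derivable_continuous_pt. exists (/ h x). apply derivable_pt_lim_ln; auto.
  - apply derivable_continuous_pt, derivable_pt_exp.
Qed.

Lemma cont_rpow0 (h s : R -> R) x r : 0 < r -> (forall y, Rabs (y - x) < r -> 0 <= h y) ->
  continuity_pt h x -> continuity_pt s x -> 0 < s x ->
  continuity_pt (fun y => rpow0 (h y) (s y)) x.
Proof.
  intros hr hpos ch cs sx.
  assert (hx0 : 0 <= h x) by (apply hpos; rewrite Rminus_diag, Rabs_R0; lra).
  destruct (Req_dec (h x) 0) as [e0|ne].
  - apply cont_eps. intros eps he.
    set (e := Rmin eps (/2)).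
    assert (he' : 0 < e) by (unfold e; apply Rmin_glb_lt; lra).
    assert (hee : e <= eps /\ e < 1) by (unfold e; split; [apply Rmin_l| pose proof (Rmin_r eps (/2)); lra]).
    set (sg := s x / 2).
    assert (hsg : 0 < sg) by (unfold sg; lra).
    set (eta := Rmin 1 (exp (ln e / sg))).
    assert (heta : 0 < eta) by (unfold eta; apply Rmin_glb_lt; [lra| apply exp_pos]).
    destruct (cont_eps_inv s x cs sg hsg) as [r1 [hr1 H1]].
    destruct (cont_eps_inv h x ch eta heta) as [r2 [hr2 H2]].
    exists (Rmin r (Rmin r1 r2)). split.
    { apply Rmin_glb_lt; auto; apply Rmin_glb_lt; auto. }
    intros y hy.
    assert (hyr : Rabs (y - x) < r) by (eapply Rlt_le_trans; [apply hy| apply Rmin_l]).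
    assert (hyr1 : Rabs (y - x) < r1) by (eapply Rlt_le_trans; [apply hy| eapply Rle_trans; [apply Rmin_r| apply Rmin_l]]).
    assert (hyr2 : Rabs (y - x) < r2) by (eapply Rlt_le_trans; [apply hy| eapply Rle_trans; [apply Rmin_r| apply Rmin_r]]).
    specialize (H1 y hyr1). specialize (H2 y hyr2). specialize (hpos y hyr).
    rewrite e0 in H2 |- *. rewrite (rpow0_zero (s x)) by lra. rewrite Rminus_0_r in *.
    rewrite Rabs_right in H2 by lra.
    assert (hsy : sg < s y) by (unfold sg in *; apply Rabs_def2 in H1; lra).
    rewrite Rabs_right by (apply Rle_ge, rpow0_ge0).
    destruct (Req_dec (h y) 0) as [->|ny].
    + rewrite rpow0_zero by lra. lra.
    + rewrite rpow0_pos by lra. unfold Rpower.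
      assert (hy1 : h y < 1) by (assert (eta <= 1) by (unfold eta; apply Rmin_l); lra).
      assert (hye : h y < exp (ln e / sg)) by (assert (eta <= exp (ln e / sg)) by (unfold eta; apply Rmin_r); lra).
      assert (l1 : ln (h y) < 0) by (rewrite <- ln_1; apply ln_increasing; lra).
      assert (l2 : ln (h y) < ln e / sg).
      { rewrite <- (ln_exp (ln e / sg)). apply ln_increasing; lra. }
      assert (l3 : s y * ln (h y) < ln e).
      { assert (sg * ln (h y) < ln e).
        { replace (ln e) with (sg * (ln e / sg)) by (field; lra). apply Rmult_lt_compat_l; lra. }
        nra. }
      apply exp_increasing in l3. rewrite exp_ln in l3 by lra. lra.
  - assert (hp : 0 < h x) by lra.
    destruct (cont_eps_inv h x ch (h x / 2) ltac:(lra)) as [r1 [hr1 H1]].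
    apply (continuity_pt_locally_ext (fun y => exp (s y * ln (h y))) _ r1); auto.
    + intros y hy. unfold Rdist in hy. specialize (H1 y hy). apply Rabs_def2 in H1.
      rewrite rpow0_pos by lra. reflexivity.
    + apply cont_exp_form; auto.
Qed.


Lemma stepfun_ext_open (f g : R -> R) a b : a <= b -> IsStepFun f a b ->
  (forall x, a < x < b -> f x = g x) -> IsStepFun g a b.
Proof.
  intros hab [l [lf [h1 [h2 [h3 [h4 h5]]]]]] he.
  exists l, lf. split; [auto|split; [auto|split; [auto|split; [auto|]]]].
  intros i hi x hx. unfold open_interval in hx.
  rewrite Rmin_left in h2 by lra. rewrite Rmax_right in h3 by lra.
  assert (q1 : pos_Rl l 0 <= pos_Rl l i) by (apply (proj1 (RList_P6 l) h1); lia).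
  assert (q2 : pos_Rl l (S i) <= pos_Rl l (pred (length l))) by (apply (proj1 (RList_P6 l) h1); lia).
  rewrite <- he by lra. apply (h5 i hi x). exact hx.
Qed.

Lemma SF_int_eq a b (f g : StepFun a b) : a <= b -> (forall x, a < x < b -> f x = g x) ->
  RiemannInt_SF f = RiemannInt_SF g.
Proof.
  intros hab he. apply Rle_antisym; apply StepFun_P37; auto; intros x hx; rewrite he; auto; lra.
Qed.

Lemma glue (F : R -> R) a b M : a < b -> (forall x, a <= x <= b -> Rabs (F x) <= M) ->
  (forall c d, a < c -> c <= d -> d < b -> Riemann_integrable F c d) -> Riemann_integrable F a b.
Proof.
  intros hab hM hint eps.
  assert (M0 : 0 <= M) by (pose proof (hM a ltac:(lra)); pose proof (Rabs_pos (F a)); lra).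
  pose proof (cond_pos eps) as he.
  set (dl := Rmin ((b - a) / 3) (eps / (4 * (M + 1)))).
  assert (hdl : 0 < dl) by (unfold dl; apply Rmin_glb_lt; [lra| apply Rdiv_lt_0_compat; lra]).
  assert (hdl1 : dl <= (b - a) / 3) by apply Rmin_l.
  assert (hdl2 : dl <= eps / (4 * (M + 1))) by apply Rmin_r.
  set (c := a + dl). set (d := b - dl).
  assert (he2 : 0 < eps / 2) by lra.
  destruct (hint c d ltac:(unfold c; lra) ltac:(unfold c, d; lra) ltac:(unfold d; lra) (mkposreal _ he2))
    as [phi1 [psi1 [H1 H2]]].
  simpl in H2.
  assert (hcd : c <= d) by (unfold c, d; lra).
  rewrite Rmin_left, Rmax_right in H1 by lra.
  set (phi := fun x => if Rle_dec x c then 0 else if Rle_dec d x then 0 else phi1 x).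
  set (psi := fun x => if Rle_dec x c then M else if Rle_dec d x then M else psi1 x).
  assert (Pa : forall (G : R -> R) v, (forall x, x <= c -> G x = v) -> IsStepFun G a c).
  { intros G v hG. apply (stepfun_ext_open (fct_cte v)). unfold c; lra. apply StepFun_P4.
    intros x hx. rewrite hG by lra. reflexivity. }
  assert (Pb : forall (G : R -> R) v, (forall x, d < x -> G x = v) -> IsStepFun G d b).
  { intros G v hG. apply (stepfun_ext_open (fct_cte v)). unfold d; lra. apply StepFun_P4.
    intros x hx. rewrite hG by lra. reflexivity. }
  assert (Pm : forall (G : R -> R) (h : StepFun c d), (forall x, c < x < d -> G x = h x) -> IsStepFun G c d).
  { intros G h hG. apply (stepfun_ext_open h); auto. apply pre. intros; rewrite hG; auto. }
  assert (phiA : forall x, x <= c -> phi x = 0).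
  { intros x hx; unfold phi; destruct (Rle_dec x c); lra. }
  assert (phiB : forall x, d < x -> phi x = 0).
  { intros x hx; unfold phi; destruct (Rle_dec x c); [lra|]; destruct (Rle_dec d x); lra. }
  assert (phiM : forall x, c < x < d -> phi x = phi1 x).
  { intros x hx; unfold phi; destruct (Rle_dec x c); [lra|]; destruct (Rle_dec d x); [lra|auto]. }
  assert (psiA : forall x, x <= c -> psi x = M).
  { intros x hx; unfold psi; destruct (Rle_dec x c); lra. }
  assert (psiB : forall x, d < x -> psi x = M).
  { intros x hx; unfold psi; destruct (Rle_dec x c); [lra|]; destruct (Rle_dec d x); lra. }
  assert (psiM : forall x, c < x < d -> psi x = psi1 x).
  { intros x hx; unfold psi; destruct (Rle_dec x c); [lra|]; destruct (Rle_dec d x); [lra|auto]. }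
  set (psa := Pa psi M psiA). set (psm := Pm psi psi1 psiM). set (psb := Pb psi M psiB).
  set (pha := Pa phi 0 phiA). set (phm := Pm phi phi1 phiM). set (phb := Pb phi 0 phiB).
  exists (mkStepFun (StepFun_P46 pha (StepFun_P46 phm phb))).
  exists (mkStepFun (StepFun_P46 psa (StepFun_P46 psm psb))).
  split.
  - intros t ht. rewrite Rmin_left, Rmax_right in ht by lra. simpl.
    destruct (Rle_dec t c) as [t1|t1].
    + rewrite phiA, psiA by lra. rewrite Rminus_0_r. apply hM; lra.
    + destruct (Rle_dec d t) as [t2|t2].
      * unfold phi, psi. destruct (Rle_dec t c); [lra|]. destruct (Rle_dec d t); [|lra].
        rewrite Rminus_0_r. apply hM; lra.
      * rewrite phiM, psiM by lra. apply H1; lra.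
  - rewrite <- (StepFun_P43 psa (StepFun_P46 psm psb)).
    rewrite <- (StepFun_P43 psm psb).
    assert (E1 : RiemannInt_SF (mkStepFun psa) = M * (c - a)).
    { rewrite <- StepFun_P18. apply SF_int_eq. unfold c; lra. intros x hx. simpl. rewrite psiA by lra. reflexivity. }
    assert (E2 : RiemannInt_SF (mkStepFun psb) = M * (b - d)).
    { rewrite <- StepFun_P18. apply SF_int_eq. unfold d; lra. intros x hx. simpl. rewrite psiB by lra. reflexivity. }
    assert (E3 : RiemannInt_SF (mkStepFun psm) = RiemannInt_SF psi1).
    { apply SF_int_eq; auto. }
    rewrite E1, E2, E3.
    assert (M * (c - a) + M * (b - d) = 2 * M * dl) by (unfold c, d; ring).
    assert (2 * M * dl <= 2 * M * (eps / (4 * (M + 1)))) by nra.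
    assert (2 * M * (eps / (4 * (M + 1))) < eps / 2).
    { replace (2 * M * (eps / (4 * (M + 1)))) with (eps / 2 * (M / (M + 1))) by (field; lra).
      assert (M / (M + 1) < 1).
      { unfold Rdiv. replace 1 with ((M+1) * / (M+1)) at 2 by (field; lra).
        apply Rmult_lt_compat_r; [apply Rinv_0_lt_compat|]; lra. }
      nra. }
    pose proof (Rabs_triang (M * (c - a)) (RiemannInt_SF psi1 + M * (b - d))).
    pose proof (Rabs_triang (RiemannInt_SF psi1) (M * (b - d))).
    rewrite (Rabs_right (M * (c - a))) in * by (unfold c; nra).
    rewrite (Rabs_right (M * (b - d))) in * by (unfold d; nra).
    lra.
Qed.


Theorem corollary1 (a b : R) (f g : R -> R)
  (hab : 0 <= a < b)
  (hf0 : forall x, a <= x <= b -> 0 <= f x)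
  (hg0 : forall x, a <= x <= b -> 0 <= g x)
  (hfc : convex_on a b f) (hgc : convex_on a b g)
  (hfi : Riemann_integrable f a b) (hgi : Riemann_integrable g a b) :
  exists pr : Riemann_integrable (integrand a b f g) a b,
    / (b - a) * RiemannInt pr <= / 3 * (f b + g a) + / 6 * (g b + f a).
Proof.
  assert (hba : 0 < b - a) by lra.
  set (T := fun x => (x - a) / (b - a)).
  assert (hT : forall x, a <= x <= b -> 0 <= T x <= 1).
  { intros x hx; unfold T; split; [apply div_ge0|apply div_le1]; lra. }
  assert (hT' : forall x, (b - x) / (b - a) = 1 - T x) by (intros; unfold T; field; lra).
  assert (fub : forall x, a <= x <= b -> f x <= (1 - T x) * f a + T x * f b).
  { intros x hx. pose proof (conv_at a b f b a (T x) x hfc ltac:(lra) ltac:(lra) (hT x hx)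
      ltac:(unfold T; field; lra)). lra. }
  assert (gub : forall x, a <= x <= b -> g x <= (1 - T x) * g a + T x * g b).
  { intros x hx. pose proof (conv_at a b g b a (T x) x hgc ltac:(lra) ltac:(lra) (hT x hx)
      ltac:(unfold T; field; lra)). lra. }
  assert (fa0 := hf0 a ltac:(lra)). assert (fb0 := hf0 b ltac:(lra)).
  assert (ga0 := hg0 a ltac:(lra)). assert (gb0 := hg0 b ltac:(lra)).
  assert (fbd : forall x, a <= x <= b -> 0 <= f x <= f a + f b).
  { intros x hx; split; auto. pose proof (fub x hx); pose proof (hT x hx); nra. }
  assert (gbd : forall x, a <= x <= b -> 0 <= g x <= g a + g b).
  { intros x hx; split; auto. pose proof (gub x hx); pose proof (hT x hx); nra. }
  set (P := fun x => T x * ((1 - T x) * f a + T x * f b) + (1 - T x) * ((1 - T x) * g a + T x * g b)).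
  assert (hle : forall x, a <= x <= b -> 0 <= integrand a b f g x <= P x).
  { intros x hx. unfold integrand. rewrite hT'. split.
    - apply Rmult_le_pos; apply rpow0_ge0.
    - eapply Rle_trans; [apply amgm; auto|]. fold (T x).
      pose proof (hT x hx). pose proof (fub x hx). pose proof (gub x hx). unfold P. nra. }
  assert (pr : Riemann_integrable (integrand a b f g) a b).
  { apply (glue _ a b (f a + f b + g a + g b)); [lra| |].
    - intros x hx. destruct (hle x hx). rewrite Rabs_right by lra.
      eapply Rle_trans; [apply H0|]. pose proof (hT x hx) as [t0 t1]. unfold P.
      set (t := T x) in *.
      assert (0 <= t * (1 - t) <= 1) by nra. assert (0 <= t * t <= 1) by nra.
      assert (0 <= (1 - t) * (1 - t) <= 1) by nra.
      assert (t * (1 - t) * f a <= f a) by nra. assert (t * t * f b <= f b) by nra.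
      assert ((1 - t) * (1 - t) * g a <= g a) by nra. assert ((1 - t) * t * g b <= g b) by nra.
      nra.
    - intros c d hc hcd hd. apply continuity_implies_RiemannInt; auto.
      intros x hx. unfold integrand.
      assert (hsc : forall k, continuity_pt (fun y => (k - y) / (b - a)) x /\ continuity_pt (fun y => (y - k) / (b - a)) x).
      { intros; split; apply derivable_continuous_pt; reg. }
      set (r := Rmin (x - a) (b - x)).
      assert (hr : 0 < r) by (unfold r; apply Rmin_glb_lt; lra).
      assert (hry : forall y, Rabs (y - x) < r -> a <= y <= b).
      { intros y hy. assert (r <= x - a) by apply Rmin_l. assert (r <= b - x) by apply Rmin_r.
        apply Rabs_def2 in hy. lra. }
      apply (continuity_pt_mult (fun y => rpow0 (f y) ((y - a) / (b - a))) (fun y => rpow0 (g y) ((b - y) / (b - a)))).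
      + apply (cont_rpow0 f (fun y => (y - a) / (b - a)) x r hr).
        * intros y hy; apply hf0, hry; auto.
        * apply (convex_cont a b f (f a + f b)); auto; lra.
        * apply hsc.
        * apply div_gt0; lra.
      + apply (cont_rpow0 g (fun y => (b - y) / (b - a)) x r hr).
        * intros y hy; apply hg0, hry; auto.
        * apply (convex_cont a b g (g a + g b)); auto; lra.
        * apply hsc.
        * apply div_gt0; lra. }
  exists pr.
  set (Q := fun x => (b - a) * (f a * (T x ^ 2 / 2 - T x ^ 3 / 3) + f b * (T x ^ 3 / 3)
            - g a * ((1 - T x) ^ 3 / 3) + g b * (T x ^ 2 / 2 - T x ^ 3 / 3))).
  assert (HP : is_RInt P a b (Q b - Q a)).
  { apply (is_RInt_derive Q P).
    - intros x _. unfold Q, P, T. auto_derive; [auto|]. field. lra.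
    - intros x _. apply continuity_pt_filterlim. apply derivable_continuous_pt. unfold P, T. reg. }
  assert (prP : Riemann_integrable P a b) by (apply ex_RInt_Reals_0; eexists; eauto).
  assert (I1 : RiemannInt pr <= RiemannInt prP).
  { apply RiemannInt_P19; [lra|]. intros x hx. apply hle; lra. }
  rewrite <- (RInt_Reals P a b prP), (is_RInt_unique _ _ _ _ HP) in I1.
  assert (EQ : Q b - Q a = (b - a) * (/ 3 * (f b + g a) + / 6 * (g b + f a))).
  { unfold Q, T. field. lra. }
  rewrite EQ in I1.
  apply (Rmult_le_compat_l (/ (b - a))) in I1; [|left; apply Rinv_0_lt_compat; lra].
  replace (/ (b - a) * ((b - a) * (/ 3 * (f b + g a) + / 6 * (g b + f a)))) with
    (/ 3 * (f b + g a) + / 6 * (g b + f a)) in I1 by (field; lra).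
  exact I1.
Qed.
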